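(* In the setting below, for all $i,j=1,\dots,N$, every unit vector $v\in\mathbb{R}^d$ and every $n\in\mathbb{N}_0$, $$\langle x_i(t)-x_j(t),v\rangle\le e^{-K(t-\bar t)}\langle x_i(\bar t)-x_j(\bar t),v\rangle+\big(1-e^{-K(t-\bar t)}\big)d(t_{2n})$$ for all $t_{2n+1}\ge t\ge\bar t\ge t_{2n}$.
   Context: Setting: $N\ge2$; $\psi:\mathbb{R}^d\times\mathbb{R}^d\to\mathbb{R}$ positive, bounded, continuous, $K:=\|\psi\|_\infty$; $\{t_n\}_{n\in\mathbb{N}_0}$ increasing, nonnegative, $t_0=0$, $t_n\to\infty$; $\alpha(0)=1$, $\alpha=1$ on $(t_{2n},t_{2n+1})$, $\alpha=-1$ on $[t_{2n+1},t_{2n+2}]$; $\{x_i\}$ solves $x_i'(t)=\frac1{N-1}\sum_{j\ne i}\alpha(t)\psi(x_i(t),x_j(t))(x_j(t)-x_i(t))$, $t>0$, $x_i(0)=x_i^0\in\mathbb{R}^d$ (continuous, $C^1$ on each $(t_n,t_{n+1})$). $d(t):=\max_{i,j}|x_i(t)-x_j(t)|$. Standing assumptions: $t_{2n+2}-t_{2n+1}<\frac{\ln 2}{K}$ for all $n$; $\sum_{p\ge0}\ln\frac{e^{K(t_{2p+2}-t_{2p+1})}}{2-e^{K(t_{2p+2}-t_{2p+1})}}<\infty$; $\sum_{p\ge0}\ln\max\{1-e^{-K(t_{2p+1}-t_{2p})},1-\frac{\psi_0}{K}(1-e^{-K(t_{2p+1}-t_{2p})})\}=-\infty$, with $\psi_0=\min_{|y|,|z|\le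 M^0}\psi(y,z)$, $M^0=e^{K\sum_{p}(t_{2p+2}-t_{2p+1})}\max_i|x_i^0|$. *)

(* Defs.v *)
From HB Require Import structures.
From mathcomp Require Import all_boot all_order all_algebra.
From mathcomp Require Import all_classical all_reals all_analysis.
Set Implicit Arguments. Unset Strict Implicit. Unset Printing Implicit Defensive.
Import Order.TTheory GRing.Theory Num.Theory.
Import numFieldNormedType.Exports.
Local Open Scope ring_scope.

(* Euclidean inner product and Euclidean norm on R^d (the library's norm on
   'rV is the sup norm, so we define the Euclidean ones explicitly). *)
Definition dotv (R : realType) (d : nat) (u v : 'rV[R]_d) : R :=
  \sum_(k < d) u 0 k * v 0 k.
Definition enorm (R : realType) (d : nat) (u : 'rV[R]_d) : R :=
  Num.sqrt (dotv u u).

Definition alpha (R : realType) (ts : nat -> R) (t : R) : R :=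
  if `[< exists n : nat, ts n.*2.+1 <= t <= ts n.*2.+2 >] then -1 else 1.

Definition diam (R : realType) (N d : nat) (x : 'I_N -> R -> 'rV[R]_d) (t : R) : R :=
  \big[Num.max/0]_(i < N) \big[Num.max/0]_(j < N) enorm (x i t - x j t).

Definition rhs (R : realType) (N d : nat) (ts : nat -> R)
  (psi : 'rV[R]_d -> 'rV[R]_d -> R) (x : 'I_N -> R -> 'rV[R]_d) (i : 'I_N) (t : R)
  : 'rV[R]_d :=
  (N.-1%:R)^-1 *: \sum_(j < N | j != i)
     (alpha ts t * psi (x i t) (x j t)) *: (x j t - x i t).

(* Main.v *)
Require Import Defs.
From HB Require Import structures.
From mathcomp Require Import all_boot all_order all_algebra.
From mathcomp Require Import all_classical all_reals all_analysis.
From mathcomp Require Import ring lra.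
Import Order.TTheory GRing.Theory Num.Theory.
Import numFieldNormedType.Exports.
Local Open Scope classical_set_scope.
Local Open Scope ring_scope.

Section Dot.
Context {R : realType} {d : nat}.
Implicit Types u w v : 'rV[R]_d.

Lemma dotvD u w v : dotv (u + w) v = dotv u v + dotv w v.
Proof. by rewrite /dotv -big_split; apply: eq_bigr => k _; rewrite mxE mulrDl. Qed.

Lemma dotv0 v : dotv 0 v = 0.
Proof. by rewrite /dotv big1 // => k _; rewrite mxE mul0r. Qed.

Lemma dotvZ c u v : dotv (c *: u) v = c * dotv u v.
Proof. by rewrite /dotv mulr_sumr; apply: eq_bigr => k _; rewrite mxE mulrA. Qed.

Lemma dotvN u v : dotv (- u) v = - dotv u v.
Proof. by rewrite -scaleN1r dotvZ mulN1r. Qed.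

Lemma dotvB u w v : dotv (u - w) v = dotv u v - dotv w v.
Proof. by rewrite dotvD dotvN. Qed.

Lemma dotv_sum (I : finType) (P : pred I) (F : I -> 'rV[R]_d) v :
  dotv (\sum_(l | P l) F l) v = \sum_(l | P l) dotv (F l) v.
Proof. by apply: (big_morph (fun u => dotv u v) (fun a b => dotvD a b v) (dotv0 v)). Qed.

Lemma dotv_le_enorm u v : enorm v = 1 -> dotv u v <= enorm u.
Proof.
move=> v1.
have vv : dotv v v = 1.
  have h0 : 0 <= dotv v v by apply: sumr_ge0 => k _; rewrite -expr2 sqr_ge0.
  by rewrite -(sqr_sqrtr h0) -/(enorm v) v1 expr1n.
have E (c : R) : \sum_(k < d) (u 0 k - c * v 0 k) ^+ 2 =
    dotv u u - 2 * c * dotv u v + c ^+ 2 * dotv v v.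
  rewrite /dotv !mulr_sumr -sumrB -big_split /=.
  by apply: eq_bigr => k _; ring.
have h : 0 <= dotv u u - dotv u v ^+ 2.
  have := E (dotv u v); rewrite vv mulr1 => E'.
  have : 0 <= \sum_(k < d) (u 0 k - dotv u v * v 0 k) ^+ 2.
    by apply: sumr_ge0 => k _; exact: sqr_ge0.
  rewrite E'; lra.
set c := dotv u v in h *.
rewrite /enorm; apply: (le_trans (ler_norm c)).
rewrite -(sqrtr_sqr c); apply: ler_wsqrtr; lra.
Qed.

End Dot.
Section DotD.
Context {R : realType} {d : nat}.

Lemma dotv_is_derive (f : R -> 'rV[R]_d) (t : R) (df v : 'rV[R]_d) :
  is_derive t 1 f df -> is_derive t 1 (fun s => dotv (f s) v) (dotv df v).
Proof.
move=> hf.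
have hc k : is_derive t 1 (fun s => f s 0 k) (df 0 k).
  have dk := (derivable_mxP f t 1).1 (@ex_derive _ _ _ _ _ _ _ hf) 0 k.
  apply: is_derive_eq (derivableP dk) _.
  rewrite -(@derive_val _ _ _ _ _ _ _ hf) derive_mx ?mxE //.
have H := is_derive_sum (fun k => is_deriveZ (v 0 k) (hc k)).
apply: is_derive_eq; first apply: (near_eq_is_derive _ H).
  near=> s. rewrite fct_sumE /dotv. apply: eq_bigr => k _. rewrite /= mulrC. by [].
rewrite /dotv; apply: eq_bigr => k _. by rewrite mulrC.
Unshelve. all: by end_near.
Qed.

Lemma dotv_continuous v : continuous (fun u : 'rV[R]_d => dotv u v).
Proof.
move=> u.
have -> : (fun u : 'rV[R]_d => dotv u v) = \sum_(k < d) (fun u : 'rV[R]_d => u 0 k * v 0 k).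
  by apply: funext => w; rewrite fct_sumE.
elim/big_ind: _.
- exact: cst_continuous.
- by move=> f g cf cg; apply: continuousD.
- move=> k _; apply: continuousM; last exact: cst_continuous.
  exact: coord_continuous.
Qed.

Lemma dotv_within_continuous (A : set R) (f : R -> 'rV[R]_d) v :
  {within A, continuous f} -> {within A, continuous (fun s => dotv (f s) v)}.
Proof.
move=> cf s.
apply: (@continuous_comp _ _ _ _ (fun u => dotv u v)); first exact: cf.
exact: dotv_continuous.
Qed.
End DotD.
Lemma deriv_ge_leftmax (R : realType) (f : R -> R) (a c df e : R) :
  a < c -> is_derive c 1 f df ->
  (forall s, a < s < c -> f s <= f c - e * (c - s)) -> e <= df.
Proof.
move=> ac hf cmax.
have fd : derivable f c 1 := (@ex_derive _ _ _ _ _ _ _ hf).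
rewrite -(@derive_val _ _ _ _ _ _ _ hf).
rewrite ['D_1 f c]cvg_at_leftE; last exact: fd.
apply: limr_ge.
  rewrite -(cvg_at_leftE (fun h => h^-1 *: ((f \o shift c) _ - f c))) //.
  apply: cvg_trans fd; apply: cvg_app.
  move=> A [r rgt0 Ae]; exists r => // x xe xgt0; apply: Ae => //.
  exact/ltr0_neq0.
near=> h.
have h0 : h < 0 by near: h; exists 1 => /=.
have ah : a < h + c.
  near: h; exists (c - a); first by rewrite /= subr_gt0.
  move=> h; rewrite /= distrC subr0.
  by move=> /ltr_normlP []; rewrite ltrBrDl ltrBlDl => ah _.
have := cmax (h + c); rewrite ah /= => /(_ ltac:(lra)) H.
rewrite /= [_%:A]mulr1.
have -> : h^-1 *: (f (h + c) - f c) = (f c - f (h + c)) / (- h).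
  by rewrite /GRing.scale /= invrN mulrN -mulNr opprB mulrC.
have hp : 0 < - h by lra.
rewrite (ler_pdivlMr _ _ hp).
have E : c - (h + c) = - h by ring.
rewrite E in H; lra.
Unshelve. all: by end_near. Qed.
Lemma max_principle (R : realType) (N : nat) (y dy : 'I_N -> R -> R) (a b B : R) :
  (forall k, {within `[a, b], continuous (y k)}) ->
  (forall k s, a < s < b -> is_derive s 1 (y k) (dy k s)) ->
  (forall k s, a < s < b -> (forall l, y l s <= y k s) -> dy k s <= 0) ->
  (forall k, y k a <= B) ->
  forall k t, a <= t -> t < b -> y k t <= B.
Proof.
move=> yc yd ydn yB k t at_ tb.
have key : forall e, 0 < e -> y k t - e * (t - a) <= B.
  move=> e e0.
  pose g l s := y l s - e * (s - a).
  have lc : continuous (fun s : R => e * (s - a)).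
    move=> s; apply: (@continuousM _ _ (cst e) (fun s => s - a)); first exact: cst_continuous.
    apply: (@continuousB _ _ _ id (cst a)); first exact: cvg_id.
    exact: cst_continuous.
  have gc l : {within `[a, t], continuous (g l)}.
    apply: (@continuous_subspaceW _ _ _ `[a, b]).
      move=> s; rewrite /= !in_itv /= => /andP[h1 h2]; apply/andP; split => //; lra.
    move=> s; apply: (@continuousB _ _ _ (from_subspace `[a, b] (y l)) (from_subspace `[a, b] (fun s => e * (s - a)))); first exact: yc.
    exact: (continuous_subspaceT lc).
  have : forall l, exists c, c \in `[a, t] /\ forall s, s \in `[a, t] -> g l s <= g l c.
    by move=> l; have [c c1 c2] := EVT_max at_ (gc l); exists c.
  move=> /choice [cf hcf].
  case: (@arg_maxP _ _ _ k predT (fun l => g l (cf l)) isT) => p _ hp.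
  have [c_in gmax] := hcf p.
  have all_le l s : s \in `[a, t] -> g l s <= g p (cf p).
    by move=> hs; apply: le_trans ((hcf l).2 s hs) (hp l isT).
  move: c_in; rewrite in_itv /= => /andP[ac ct].
  have [ac'|ac'] := eqVneq a (cf p).
    have := all_le k t; rewrite in_itv /= at_ lexx => /(_ isT).
    rewrite /g -ac' subrr mulr0 subr0 => H.
    exact: le_trans H (yB p).
  have acs : a < cf p by rewrite lt_neqAle ac' ac.
  have cb : a < cf p < b by rewrite acs /=; lra.
  have hder := yd p (cf p) cb.
  have h1 : e <= dy p (cf p).
    apply: (@deriv_ge_leftmax _ _ a _ _ e acs hder) => s /andP[s1 s2].
    have := gmax s; rewrite in_itv /= (ltW s1) /= => /(_ ltac:(apply/ltW; lra)).
    rewrite /g => H; lra.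
  have h2 : dy p (cf p) <= 0.
    apply: ydn => // l.
    have := all_le l (cf p); rewrite in_itv /= ac ct => /(_ isT).
    rewrite /g => H; lra.
  lra.
have [->|ta] := eqVneq t a; first exact: yB.
have ta' : 0 < t - a by rewrite subr_gt0 lt_neqAle eq_sym ta at_.
apply/ler_addgt0Pr => e e0.
have := key (e / (t - a)) (divr_gt0 e0 ta').
rewrite divfK; last by rewrite gt_eqF.
lra.
Qed.
Lemma is_derive_aff (R : realType) (K c s : R) :
  is_derive s 1 (fun s => K * (s - c)) K.
Proof.
have H := is_deriveZ K (is_deriveB (is_derive_id s 1) (is_derive_cst c s 1)).
have H2 : is_derive s 1 (fun s => K * (s - c)) (K *: (1 - 0)).
  apply: (near_eq_is_derive _ H); by near=> u.
apply: (is_derive_eq H2).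
by rewrite subr0 /GRing.scale /= mulr1.
Unshelve. all: by end_near. Qed.

Lemma gronwall_step (R : realType) (D dD : R -> R) (K d0 tb t : R) :
  tb <= t -> {within `[tb, t], continuous D} ->
  (forall s, tb < s < t -> is_derive s 1 D (dD s)) ->
  (forall s, tb < s < t -> dD s <= K * d0 - K * D s) ->
  D t <= expR (- K * (t - tb)) * D tb + (1 - expR (- K * (t - tb))) * d0.
Proof.
move=> htt Dc Dd Dle.
pose E s := expR (K * (s - tb)).
pose h s := E s * (D s - d0).
have Ed (s : R) : is_derive s 1 E (E s * K).
  have H := @is_derive1_comp _ expR (fun s => K * (s - tb)) s _ _ (is_derive_expR _) (is_derive_aff _ K tb s).
  have H2 : is_derive s 1 E (expR (K * (s - tb)) * K).
    apply: (near_eq_is_derive _ H); by near=> u.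
  exact: H2.
have hd (s : R) : tb < s < t -> is_derive s 1 h (E s * dD s + (D s - d0) * (E s * K)).
  move=> hs.
  have H1 := is_deriveB (Dd s hs) (is_derive_cst d0 s 1).
  have H := is_deriveM (Ed s) H1.
  have H2 : is_derive s 1 h (E s *: (dD s - 0) + (D s - d0) *: (E s * K)).
    apply: (near_eq_is_derive _ H); by near=> u.
  apply: (is_derive_eq H2).
  by rewrite subr0.
have hc : {within `[tb, t], continuous h}.
  have Ec : continuous E.
    move=> s; apply: (@continuous_comp _ _ _ (fun s => K * (s - tb)) expR).
      apply: (@continuousM _ _ (cst K) (fun s => s - tb)); first exact: cst_continuous.
      apply: (@continuousB _ _ _ id (cst tb)); first exact: cvg_id.
      exact: cst_continuous.
    exact: continuous_expR.
  move=> s; apply: (@continuousM _ _ (from_subspace `[tb, t] E)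
     (from_subspace `[tb, t] (fun s => D s - d0))).
    exact: (continuous_subspaceT Ec).
  apply: (@continuousB _ _ _ (from_subspace `[tb, t] D) (from_subspace `[tb, t] (cst d0))).
    exact: Dc.
  exact: cst_continuous.
have key : h t <= h tb.
  have [->|tne] := eqVneq t tb; first by [].
  have tlt : tb < t by rewrite lt_neqAle eq_sym tne htt.
  have [c cin eqc] := MVT tlt (fun s hs => hd s ltac:(by move: hs; rewrite in_itv)) hc.
  move: cin; rewrite in_itv /= => cin.
  suff : h t - h tb <= 0 by lra.
  rewrite eqc.
  apply: mulr_le0_ge0; last by rewrite subr_ge0.
  have Ep : 0 < E c by exact: expR_gt0.
  have := Dle c cin.
  have -> : E c * dD c + (D c - d0) * (E c * K) = E c * (dD c + K * (D c - d0)) by ring.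
  move=> H; apply: mulr_ge0_le0; first exact: ltW.
  lra.
have inv : expR (- K * (t - tb)) * E t = 1.
  by rewrite /E -expRD mulNr addNr expR0.
have ep : 0 <= expR (- K * (t - tb)) by exact: expR_ge0.
have : expR (- K * (t - tb)) * h t <= expR (- K * (t - tb)) * h tb.
  exact: ler_wpM2l.
rewrite /h mulrA inv mul1r /E subrr mulr0 expR0 mul1r.
nra.
Unshelve. all: by end_near. Qed.
Lemma dotv_vN (R : realType) (d : nat) (u v : 'rV[R]_d) : dotv u (- v) = - dotv u v.
Proof. by rewrite /dotv -sumrN; apply: eq_bigr => k _; rewrite mxE mulrN. Qed.

Theorem proposition3p10 (R : realType) (N d : nat)
  (psi : 'rV[R]_d -> 'rV[R]_d -> R) (K : R) (ts : nat -> R)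
  (x : 'I_N -> R -> 'rV[R]_d) (psi0 : R) :
  (2 <= N)%N ->
  (* psi positive, bounded, continuous; K = sup psi *)
  (forall y z, 0 < psi y z) ->
  continuous (fun p : 'rV[R]_d * 'rV[R]_d => psi p.1 p.2) ->
  (forall y z, psi y z <= K) ->
  (forall e, 0 < e -> exists y z, K - e < psi y z) ->
  (* switching times *)
  ts 0%N = 0 ->
  (forall n, ts n < ts n.+1) ->
  ts @ \oo --> +oo ->
  (* the solution *)
  (forall i, {within `[0, +oo[, continuous (x i)}) ->
  (forall i n t, ts n < t < ts n.+1 -> is_derive t 1 (x i) (rhs ts psi x i t)) ->
  (* standing assumptions *)
  (forall n, ts n.*2.+2 - ts n.*2.+1 < ln 2 / K) ->
  cvgn (series (fun p : nat =>
     ln (expR (K * (ts p.*2.+2 - ts p.*2.+1))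
         / (2 - expR (K * (ts p.*2.+2 - ts p.*2.+1)))))) ->
  (let M0 := expR (K * limn (series (fun p : nat => ts p.*2.+2 - ts p.*2.+1)))
             * \big[Num.max/0]_(i < N) enorm (x i 0) in
   (exists y z, enorm y <= M0 /\ enorm z <= M0 /\ psi y z = psi0) /\
   (forall y z, enorm y <= M0 -> enorm z <= M0 -> psi0 <= psi y z)) ->
  series (fun p : nat =>
     ln (Num.max (1 - expR (- K * (ts p.*2.+1 - ts p.*2)))
                 (1 - psi0 / K * (1 - expR (- K * (ts p.*2.+1 - ts p.*2))))))
     @ \oo --> -oo ->
  (* conclusion *)
  forall (i j : 'I_N) (v : 'rV[R]_d), enorm v = 1 ->
  forall (n : nat) (t tb : R), ts n.*2 <= tb -> tb <= t -> t <= ts n.*2.+1 ->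
  dotv (x i t - x j t) v <=
    expR (- K * (t - tb)) * dotv (x i tb - x j tb) v
    + (1 - expR (- K * (t - tb))) * diam x (ts n.*2).
Proof.
move=> N2 psi_pos _ psiK _ ts0 tsinc _ xc xd _ _ _ _ i j v v1 n t tb h1 h2 h3.
set a := ts n.*2.
set b := ts n.*2.+1.
have K0 : 0 <= K by apply: le_trans (psiK 0 0); exact: ltW.
have mono : forall p q, (p < q)%N -> ts p < ts q.
  move=> p q pq; exact: (@homo_ltn _ ts (fun x y => x < y) (fun y x z h1 h2 => lt_trans h1 h2) tsinc _ _ pq).
have monole : forall p q, (p <= q)%N -> ts p <= ts q.
  move=> p q; rewrite leq_eqVlt => /orP[/eqP -> //|/mono]; exact: ltW.
have a0 : 0 <= a by rewrite /a -ts0; apply: monole.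
have alpha1 : forall s, a < s < b -> alpha ts s = 1.
  move=> s /andP[s1 s2]; rewrite /alpha; case: asboolP => // -[m /andP[m1 m2]].
  exfalso; have [mn|nm] := ltnP m n.
    have : ts m.*2.+2 <= a by apply: monole; rewrite -doubleS leq_double.
    lra.
  have : b <= ts m.*2.+1 by apply: monole; rewrite ltnS leq_double.
  lra.
pose Y (w : 'rV[R]_d) k s := dotv (x k s) w.
pose dy (w : 'rV[R]_d) k s := dotv (rhs ts psi x k s) w.
pose c : R := (N.-1%:R)^-1.
have Nn0 : (N.-1%:R : R) != 0 by rewrite pnatr_eq0 -lt0n -subn1 subn_gt0.
have hdy w k s : a < s < b -> dy w k s =
    c * \sum_(l | l != k) psi (x k s) (x l s) * (Y w l s - Y w k s).
  move=> hs; rewrite /dy /rhs dotvZ dotv_sum; congr (_ * _).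
  by apply: eq_bigr => l _; rewrite dotvZ dotvB alpha1 // mul1r.
have hup w k s U : a < s < b -> (forall l, Y w l s <= U) ->
    dy w k s <= K * (U - Y w k s).
  move=> hs hU; rewrite hdy //.
  have Uk : 0 <= U - Y w k s by rewrite subr_ge0.
  apply: (@le_trans _ _ (c * \sum_(l | l != k) K * (U - Y w k s))).
    apply: ler_wpM2l; first by rewrite /c invr_ge0 ler0n.
    apply: ler_sum => l _.
    apply: (@le_trans _ _ (psi (x k s) (x l s) * (U - Y w k s))).
      apply: ler_wpM2l; first exact: ltW.
      by rewrite lerD2r.
    exact: ler_wpM2r.
  have -> : \sum_(l | l != k) K * (U - Y w k s) = \sum_(l in predC1 k) K * (U - Y w k s).
    by apply: eq_bigl => l; rewrite !inE.
  by rewrite sumr_const cardC1 card_ord -mulr_natr mulrCA /c mulVf // mulr1.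
have yc w k : {within `[a, b], continuous (Y w k)}.
  have := @dotv_within_continuous _ _ _ _ w (xc k).
  apply: continuous_subspaceW.
  move=> s; rewrite /= !in_itv /= => /andP[s1 _]. by rewrite (le_trans a0 s1).
have yd w k s : a < s < b -> is_derive s 1 (Y w k) (dy w k s).
  by move=> hs; apply: dotv_is_derive; exact: (xd k n.*2 s hs).
have hmax w U : (forall l, Y w l a <= U) ->
    forall k s, a <= s -> s < b -> Y w k s <= U.
  move=> hU k s s1 s2.
  apply: (@max_principle _ _ (Y w) (dy w) a b U (yc w) (yd w) _ hU k s s1 s2).
  move=> k' s' hs hk.
  by have := hup w k' s' (Y w k' s') hs hk; rewrite subrr mulr0.
case: (@arg_maxP _ _ _ i predT (fun l => Y v l a) isT) => p _ hp.
case: (@arg_maxP _ _ _ i predT (fun l => Y (- v) l a) isT) => q _ hq.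
have upb k s : a <= s -> s < b -> Y v k s <= Y v p a.
  by apply: hmax => l; exact: hp.
have lob k s : a <= s -> s < b -> Y v q a <= Y v k s.
  move=> hs1 hs2; have := hmax (- v) _ (fun l => hq l isT) k s hs1 hs2.
  by rewrite /Y !dotv_vN lerN2.
have dgap : Y v p a - Y v q a <= diam x a.
  rewrite /Y -dotvB; apply: (le_trans (dotv_le_enorm _ _ v1)).
  rewrite /diam; apply: le_trans (le_bigmax _ _ p).
  exact: (le_bigmax _ (fun j0 => enorm (x p a - x j0 a)) q).
have sub : `[tb, t] `<=` `[a, b].
  move=> s; rewrite /= !in_itv /= => /andP[s1 s2]; apply/andP; split.
    exact: le_trans h1 s1.
  exact: le_trans s2 h3.
have Dfun : (fun s => dotv (x i s - x j s) v) = (fun s => Y v i s - Y v j s).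
  by apply: funext => s; rewrite dotvB.
apply: (@gronwall_step _ (fun s => dotv (x i s - x j s) v)
          (fun s => dy v i s - dy v j s) K (diam x a) tb t h2).
- rewrite Dfun => s.
  apply: (@continuousB _ _ _ (from_subspace `[tb, t] (Y v i))
            (from_subspace `[tb, t] (Y v j))).
    exact: (continuous_subspaceW sub (yc v i)).
  exact: (continuous_subspaceW sub (yc v j)).
- move=> s /andP[s1 s2].
  have hs : a < s < b by apply/andP; split; [exact: le_lt_trans h1 s1 | exact: lt_le_trans s2 h3].
  have H := is_deriveB (yd v i s hs) (yd v j s hs).
  have H2 : is_derive s 1 (fun s => dotv (x i s - x j s) v) (dy v i s - dy v j s).
    apply: (near_eq_is_derive _ H); near=> u.
    by rewrite dotvB.
  exact: H2.
- move=> s /andP[s1 s2].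
  have hs : a < s < b by apply/andP; split; [exact: le_lt_trans h1 s1 | exact: lt_le_trans s2 h3].
  have s1' : a <= s by apply: ltW; exact: le_lt_trans h1 s1.
  have s2' : s < b by exact: lt_le_trans s2 h3.
  have Hi := hup v i s (Y v p a) hs (fun l => upb l s s1' s2').
  have Hj := hup (- v) j s (- Y v q a) hs
    (fun l => ltac:(rewrite /Y dotv_vN lerN2; exact: (lob l s s1' s2'))).
  move: Hj; rewrite /dy /Y !dotv_vN -/(Y v j s) -/(dy v j s) => Hj.
  rewrite dotvB -/(Y v i s) -/(Y v j s).
  move: Hi; rewrite -/(Y v i s) => Hi.
  move: Hj; rewrite -/(Y v q a) => Hj.
  rewrite -/(dy v i s).
  have := ler_wpM2l K0 dgap.
  lra.
Unshelve. all: by end_near. Qed.
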